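(* Let $\bar F^a,\bar F^b:\mathbb{R}^n\times(0,\infty)\to\mathbb{R}^n$ be closed-loop discrete-time models and suppose that $\bar F^a$ is EPC with $\bar F^b$. Then: (i) $\bar F^a$ is SPS-VSR if and only if $\bar F^b$ is SPS-VSR; (ii) $\bar F^a$ is LES-VSR if and only if $\bar F^b$ is LES-VSR; (iii) $\bar F^a$ is SLES-VSR if and only if $\bar F^b$ is SLES-VSR.
   Context: A closed-loop discrete-time (DT) model is a map $\bar F:\mathbb{R}^n\times(0,\infty)\to\mathbb{R}^n$; its solutions under a sampling-period sequence $\{T_i\}_{i=0}^\infty$ are given by $x_{k+1}=\bar F(x_k,T_k)$, $k\in\mathbb{N}_0$. For $T>0$, $\Phi(T)$ denotes the set of all sequences $\{T_i\}_{i=0}^\infty$ with $T_i\in(0,T)$ for all $i$; by convention $\sum_{i=0}^{-1}T_i=0$. $|\cdot|$ is the Euclidean norm. $\mathcal{K}$: continuous strictly increasing $\alpha:\mathbb{R}_{\ge0}\to\mathbb{R}_{\ge0}$ with $\alpha(0)=0$; $\mathcal{K}_\infty$: unbounded functions in $\mathcal{K}$; $\mathcal{KL}$: $\beta:\mathbb{R}_{\ge0}^2\to\mathbb{R}_{\ge0}$ with $\beta(\cdot,t)\in\mathcal{K}$ for each $t$ and $\beta(s,\cdot)$ strictly decreasing to $0$ for each $s$. EPC: $\bar F^a$ is Equilibrium-Preserving Consistent (EPC) with $\bar F^b$ if for each $M\ge0$ there exist $K=K(M)>0$, $T^*=T^*(M)>0$ and $\rho\in\mathcal{K}_\infty$ such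 that $|\bar F^a(x,T)-\bar F^b(y,T)|\le(1+KT)|x-y|+T\rho(T)\max\{|x|,|y|\}$ for all $|x|,|y|\le M$ and $T\in(0,T^* )$. SPS-VSR: there exists $\beta\in\mathcal{KL}$ such that for every $M\ge0$ and $R>0$ there exists $T^\star=T^\star(M,R)>0$ such that for all $k\in\mathbb{N}_0$, $\{T_i\}\in\Phi(T^\star)$ and $|x_0|\le M$, the solutions satisfy $|x_k|\le\beta(|x_0|,\sum_{i=0}^{k-1}T_i)+R$. LES-VSR: there exist $K\ge1$ and $R,T^\star,\lambda>0$ such that for all $k\in\mathbb{N}_0$, $\{T_i\}\in\Phi(T^\star)$ and $|x_0|\le R$, the solutions satisfy $|x_k|\le K|x_0|e^{-\lambda\sum_{i=0}^{k-1}T_i}$. SLES-VSR: both SPS-VSR and LES-VSR. *)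

(* Defs.v *)
From HB Require Import structures.
From mathcomp Require Import all_boot all_order all_algebra.
From mathcomp Require Import all_classical all_reals all_analysis.
Set Implicit Arguments. Unset Strict Implicit. Unset Printing Implicit Defensive.
Import Order.TTheory GRing.Theory Num.Theory.
Import numFieldNormedType.Exports.
Local Open Scope classical_set_scope.
Local Open Scope ring_scope.

Section Defs.
Variable R : realType.

Definition enorm (n : nat) (x : 'rV[R]_n) : R :=
  Num.sqrt (\sum_(i < n) (x ord0 i) ^+ 2).

Definition class_K (a : R -> R) : Prop :=
  {within [set x : R | 0 <= x], continuous a} /\
  (forall x y : R, 0 <= x -> x < y -> a x < a y) /\
  a 0 = 0.

Definition class_Kinf (a : R -> R) : Prop :=
  class_K a /\ (forall M : R, exists s : R, 0 <= s /\ M < a s).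

Definition class_KL (b : R -> R -> R) : Prop :=
  (forall t : R, 0 <= t -> class_K (fun s => b s t)) /\
  (forall s : R, 0 < s ->
     (forall t1 t2 : R, 0 <= t1 -> t1 < t2 -> b s t2 < b s t1) /\
     (b s t @[t --> +oo] --> (0 : R))).

(* closed-loop DT model: F x T (only T > 0 is ever used) *)
Definition DTmodel (n : nat) := 'rV[R]_n -> R -> 'rV[R]_n.

Fixpoint sol (n : nat) (F : DTmodel n) (x0 : 'rV[R]_n) (Ts : nat -> R) (k : nat)
  : 'rV[R]_n :=
  match k with
  | O => x0
  | S k' => F (sol F x0 Ts k') (Ts k')
  end.

Definition tsum (Ts : nat -> R) (k : nat) : R := \sum_(i < k) Ts i.

Definition inPhi (T : R) (Ts : nat -> R) : Prop := forall i, 0 < Ts i < T.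

Definition EPC (n : nat) (Fa Fb : DTmodel n) : Prop :=
  forall M : R, 0 <= M ->
  exists K Tstar : R, 0 < K /\ 0 < Tstar /\
  exists rho : R -> R, class_Kinf rho /\
  forall (x y : 'rV[R]_n) (T : R),
    enorm x <= M -> enorm y <= M -> 0 < T < Tstar ->
    enorm (Fa x T - Fb y T) <=
      (1 + K * T) * enorm (x - y) + T * rho T * Num.max (enorm x) (enorm y).

Definition SPS_VSR (n : nat) (F : DTmodel n) : Prop :=
  exists beta : R -> R -> R, class_KL beta /\
  forall M Rr : R, 0 <= M -> 0 < Rr ->
  exists Tstar : R, 0 < Tstar /\
  forall (k : nat) (Ts : nat -> R) (x0 : 'rV[R]_n),
    inPhi Tstar Ts -> enorm x0 <= M ->
    enorm (sol F x0 Ts k) <= beta (enorm x0) (tsum Ts k) + Rr.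

Definition LES_VSR (n : nat) (F : DTmodel n) : Prop :=
  exists K Rr Tstar lam : R, 1 <= K /\ 0 < Rr /\ 0 < Tstar /\ 0 < lam /\
  forall (k : nat) (Ts : nat -> R) (x0 : 'rV[R]_n),
    inPhi Tstar Ts -> enorm x0 <= Rr ->
    enorm (sol F x0 Ts k) <= K * enorm x0 * expR (- (lam * tsum Ts k)).

Definition SLES_VSR (n : nat) (F : DTmodel n) : Prop :=
  SPS_VSR F /\ LES_VSR F.

End Defs.

(* Main.v *)
Require Import Defs.
From HB Require Import structures.
From mathcomp Require Import all_boot all_order all_algebra.
From mathcomp Require Import all_classical all_reals all_analysis.
From mathcomp Require Import ring lra.
Import Order.TTheory GRing.Theory Num.Theory.
Local Open Scope ring_scope.
Local Open Scope classical_set_scope.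

Section Helpers.
Context {R : realType}.
Context {n : nat}.
Implicit Types x y : 'rV[R]_n.

Lemma enorm_ge0 x : 0 <= enorm x.
Proof. exact: sqrtr_ge0. Qed.

Lemma enormN x : enorm (- x) = enorm x.
Proof.
rewrite /enorm; congr Num.sqrt; apply: eq_bigr => i _.
by rewrite mxE sqrrN.
Qed.

Lemma sumsq_ge0 (f : 'I_n -> R) : 0 <= \sum_(i < n) f i ^+ 2.
Proof. by apply: sumr_ge0 => i _; exact: sqr_ge0. Qed.

Lemma cs_sum (f g : 'I_n -> R) :
  \sum_(i < n) f i * g i <=
  Num.sqrt (\sum_(i < n) f i ^+ 2) * Num.sqrt (\sum_(i < n) g i ^+ 2).
Proof.
set A := \sum_(i < n) f i ^+ 2; set D := \sum_(i < n) g i ^+ 2.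
have A0 : 0 <= A by exact: sumsq_ge0.
have D0 : 0 <= D by exact: sumsq_ge0.
have [Ae|An] := eqVneq A 0.
  have fz : forall i, f i = 0.
    move=> i; apply/eqP; rewrite -sqrf_eq0; apply/eqP.
    by apply: (psumr_eq0P (P := xpredT) (fun i _ => sqr_ge0 (f i)) Ae).
  rewrite big1 ?Ae ?sqrtr0 ?mul0r // => i _; by rewrite fz mul0r.
have [De|Dn] := eqVneq D 0.
  have gz : forall i, g i = 0.
    move=> i; apply/eqP; rewrite -sqrf_eq0; apply/eqP.
    by apply: (psumr_eq0P (P := xpredT) (fun i _ => sqr_ge0 (g i)) De).
  rewrite big1 ?De ?sqrtr0 ?mulr0 // => i _; by rewrite gz mulr0.
set a := Num.sqrt A; set d := Num.sqrt D.
have ap : 0 < a by rewrite sqrtr_gt0 lt_neqAle eq_sym An A0.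
have dp : 0 < d by rewrite sqrtr_gt0 lt_neqAle eq_sym Dn D0.
have a2 : a ^+ 2 = A by rewrite sqr_sqrtr.
have d2 : d ^+ 2 = D by rewrite sqr_sqrtr.
have key : forall i, 2 * (f i * g i) <= (f i ^+ 2) * (d / a) + (g i ^+ 2) * (a / d).
  move=> i.
  have h : 0 <= (f i * d - g i * a) ^+ 2 by exact: sqr_ge0.
  have had : 0 < a * d by exact: mulr_gt0.
  rewrite -(ler_pM2r had).
  have -> : (f i ^+ 2 * (d / a) + g i ^+ 2 * (a / d)) * (a * d)
       = f i ^+ 2 * d ^+ 2 + g i ^+ 2 * a ^+ 2.
    by field; rewrite ?gt_eqF.
  move: h; rewrite sqrrB.
  have -> : 2 * (f i * g i) * (a * d) = (f i * d) * (g i * a) *+ 2.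
    by rewrite mulr2n; ring.
  rewrite !exprMn; lra.
have S := ler_sum (index_enum 'I_n) (fun i (_ : true) => key i).
rewrite -mulr_sumr big_split /= -!mulr_suml -/A -/D in S.
have E : A * (d / a) + D * (a / d) = 2 * (a * d).
  rewrite -a2 -d2; field; by rewrite ?gt_eqF.
rewrite E in S.
by rewrite -(ler_pM2l (ltr0n R 2)).
Qed.

Lemma enormD x y : enorm (x + y) <= enorm x + enorm y.
Proof.
rewrite /enorm.
have h : \sum_(i < n) (x + y) ord0 i ^+ 2 =
  \sum_(i < n) x ord0 i ^+ 2 + \sum_(i < n) y ord0 i ^+ 2
  + 2 * \sum_(i < n) x ord0 i * y ord0 i.
  rewrite mulr_sumr -!big_split /=; apply: eq_bigr => i _.
  by rewrite mxE; ring.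
rewrite h.
set A := \sum_(i < n) x ord0 i ^+ 2; set D := \sum_(i < n) y ord0 i ^+ 2.
have A0 : 0 <= A by exact: sumsq_ge0.
have D0 : 0 <= D by exact: sumsq_ge0.
have e : Num.sqrt A + Num.sqrt D = Num.sqrt ((Num.sqrt A + Num.sqrt D) ^+ 2).
  by rewrite sqrtr_sqr ger0_norm // addr_ge0 // sqrtr_ge0.
rewrite e ler_sqrt ?sqr_ge0 //.
rewrite sqrrD !sqr_sqrtr //.
have := cs_sum (fun i => x ord0 i) (fun i => y ord0 i).
rewrite -/A -/D => c.
rewrite -mulr_natl; lra.
Qed.

End Helpers.

Lemma classK_small {R : realType} (a : R -> R) : class_K a ->
  forall e, 0 < e -> exists2 d, 0 < d & forall x, 0 <= x <= d -> a x <= e.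
Proof.
move=> [c [inc a0]] e e0.
have E : [set x : R | 0 <= x] = `[0, +oo[%classic by rewrite set_itvcy.
rewrite E in c.
have [_ /cvgrPdist_le /(_ e e0)] := (continuous_within_itvcyP 0 a).1 c.
rewrite a0 => /nbhs_ballP [d d0 H].
exists (d / 2); first by rewrite divr_gt0.
move=> x /andP[x0 xd].
have [->|xn0] := eqVneq x 0; first by rewrite a0 ltW.
have xp : 0 < x by rewrite lt_neqAle eq_sym xn0 x0.
have := H x; rewrite /ball_ /= sub0r normrN ger0_norm //.
have xd' : x < d by apply: (le_lt_trans xd); rewrite ltr_pdivrMr // ltr_pMr //ltr1n.
move=> /(_ xd' xp); rewrite sub0r normrN => h.
exact: le_trans (ler_norm _) h.
Qed.
Lemma KL_small {R : realType} (b : R -> R -> R) : class_KL b ->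
  forall s e, 0 < s -> 0 < e -> exists2 tau, 0 < tau & b s tau <= e.
Proof.
move=> [_ hd] s e s0 e0.
have [_ /cvgrPdist_le /(_ e e0)] := hd s s0.
move=> [M [Mr HM]].
exists (Num.max M 0 + 1); first by rewrite ltr_pwDr // le_max lexx orbT.
have := HM (Num.max M 0 + 1).
rewrite sub0r normrN => h.
apply: le_trans (ler_norm _) (h _).
by rewrite ltr_pwDr // le_max lexx.
Qed.

Section More.
Context {R : realType}.

Lemma classK_le {a : R -> R} : class_K a -> forall x y, 0 <= x -> x <= y -> a x <= a y.
Proof.
move=> [_ [inc _]] x y x0; rewrite le_eqVlt => /orP[/eqP->//|xy].
exact/ltW/inc.
Qed.

Lemma classK_ge0 {a : R -> R} : class_K a -> forall x, 0 <= x -> 0 <= a x.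
Proof.
move=> h x x0; have := classK_le h 0 x (lexx 0) x0.
by case: h => [_ [_ ->]].
Qed.

Lemma KL_le {b : R -> R -> R} : class_KL b ->
  forall s s' t t', 0 <= s -> s <= s' -> 0 <= t' -> t' <= t -> b s t <= b s' t'.
Proof.
move=> [hK hd] s s' t t' s0 ss' t0 tt'.
have t0' : 0 <= t by exact: le_trans tt'.
apply: (le_trans (classK_le (hK t t0') _ _ s0 ss')).
have [s'0|s'p] := eqVneq s' 0.
  rewrite s'0; case: (hK t t0') => _ [_ /= ->]; case: (hK t' t0) => _ [_ /= ->].
  by [].
have s'pos : 0 < s' by rewrite lt_neqAle eq_sym s'p (le_trans s0 ss').
move: tt'; rewrite le_eqVlt => /orP[/eqP->//|tt'].
exact/ltW/((hd s' s'pos).1).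
Qed.

Lemma KL_ge0 {b : R -> R -> R} : class_KL b -> forall s t, 0 <= s -> 0 <= t -> 0 <= b s t.
Proof. by move=> [hK _] s t s0 t0; exact: (classK_ge0 (hK t t0) s s0). Qed.

Lemma tsumS (Ts : nat -> R) k : tsum Ts k.+1 = tsum Ts k + Ts k.
Proof. by rewrite /tsum big_ord_recr. Qed.

Lemma tsum0 (Ts : nat -> R) : tsum Ts 0 = 0.
Proof. by rewrite /tsum big_ord0. Qed.

Lemma tsum_shift (Ts : nat -> R) m k :
  tsum Ts (m + k) = tsum Ts m + tsum (fun i => Ts (m + i)%N) k.
Proof. by rewrite /tsum big_split_ord. Qed.

Lemma tsum_ge0 T (Ts : nat -> R) k : inPhi T Ts -> 0 <= tsum Ts k.
Proof.
move=> h; apply: sumr_ge0 => i _; by have /andP[/ltW] := h i.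
Qed.

Lemma tsum_mono T (Ts : nat -> R) j k : inPhi T Ts -> (j <= k)%N -> tsum Ts j <= tsum Ts k.
Proof.
move=> h /subnKC <-; rewrite tsum_shift lerDl.
apply: sumr_ge0 => i _; by have /andP[/ltW] := h (j + i)%N.
Qed.

Lemma inPhi_shift T (Ts : nat -> R) m : inPhi T Ts -> inPhi T (fun i => Ts (m + i)%N).
Proof. by move=> h i; exact: h. Qed.

Lemma sol_shift n (F : DTmodel R n) x0 Ts m k :
  sol F x0 Ts (m + k) = sol F (sol F x0 Ts m) (fun i => Ts (m + i)%N) k.
Proof. by elim: k => [|k IH]; rewrite ?addn0 // addnS /= IH. Qed.

Lemma first_passage T (Ts : nat -> R) tau k : inPhi T Ts -> 0 < tau ->
  tsum Ts k < tau \/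
  exists m, [/\ (0 < m)%N, (m <= k)%N, tau <= tsum Ts m & tsum Ts m < tau + T].
Proof.
move=> h tp; elim: k => [|k [lt|[m [m0 mk t1 t2]]]].
- by left; rewrite tsum0.
- have [lt'|ge] := ltP (tsum Ts k.+1) tau; first by left.
  right; exists k.+1; split => //.
  by rewrite tsumS; have /andP[_ hk] := h k; exact: ltrD.
- by right; exists m; split => //; exact: leqW.
Qed.

End More.
Section Cmp.
Context {R : realType}.
Context {n : nat}.

Lemma enorm_subxx (x : 'rV[R]_n) : enorm (x - x) = 0.
Proof.
rewrite /enorm subrr big1 ?sqrtr0 // => i _; by rewrite mxE expr0n.
Qed.

Lemma enorm_tri (x y : 'rV[R]_n) : enorm x <= enorm y + enorm (x - y).
Proof. by have := @enormD R n y (x - y); rewrite addrC subrK. Qed.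

Lemma compare (Fa Fb : DTmodel R n) M K T1 (rho : R -> R) rho1 B H Ts x0 :
  0 < K -> 0 <= rho1 ->
  (forall x y T, enorm x <= M -> enorm y <= M -> 0 < T < T1 ->
     enorm (Fa x T - Fb y T) <=
       (1 + K * T) * enorm (x - y) + T * rho T * Num.max (enorm x) (enorm y)) ->
  inPhi T1 Ts -> (forall i, rho (Ts i) <= rho1) ->
  (forall i, enorm (sol Fb x0 Ts i) <= B) ->
  B + rho1 * B / (K + rho1) * (expR ((K + rho1) * H) - 1) <= M ->
  forall j, tsum Ts j <= H ->
   enorm (sol Fa x0 Ts j - sol Fb x0 Ts j) <=
     rho1 * B / (K + rho1) * (expR ((K + rho1) * tsum Ts j) - 1).
Proof.
move=> K0 r0 epc hT hr hB hM.
set a := K + rho1.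
have a0 : 0 < a by rewrite /a ltr_pwDl.
have B0 : 0 <= B by exact: le_trans (@enorm_ge0 R n _) (hB 0%N).
set c := rho1 * B / a.
have c0 : 0 <= c by rewrite /c divr_ge0 ?mulr_ge0 // ltW.
have ca : c * a = rho1 * B by rewrite /c; field; rewrite gt_eqF.
elim=> [|j IH].
  by rewrite /= enorm_subxx tsum0 mulr0 expR0 subrr mulr0.
rewrite tsumS => hH.
have /andP[T0 T1'] := hT j.
set t := tsum Ts j in IH hH *; set T := Ts j in hH T0 T1' *.
have t0 : 0 <= t by exact: tsum_ge0 hT.
have tH : t <= H by apply: le_trans hH; rewrite lerDl ltW.
have := IH tH; rewrite -/a -/c => He.
set x := sol Fa x0 Ts j in He *; set y := sol Fb x0 Ts j in He *.
set e := enorm (x - y) in He *.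
have e0 : 0 <= e by exact: (@enorm_ge0 R n).
have EE : c * (expR (a * t) - 1) <= c * (expR (a * H) - 1).
  by apply: ler_wpM2l => //; rewrite lerD2r ler_expR ler_pM2l.
have hy : enorm y <= B := hB j.
have hx : enorm x <= B + e by have := enorm_tri x y; rewrite -/e; lra.
rewrite -/a -/c in hM.
have hyM : enorm y <= M by lra.
have hxM : enorm x <= M by lra.
have := epc x y T hxM hyM; rewrite T0 T1' => /(_ isT).
change (sol Fa x0 Ts j.+1) with (Fa x T); change (sol Fb x0 Ts j.+1) with (Fb y T).
rewrite -/e => hstep; apply: (le_trans hstep).
have hmax : Num.max (enorm x) (enorm y) <= B + e by rewrite ge_max hx /=; lra.
have m0 : 0 <= Num.max (enorm x) (enorm y) by rewrite le_max (@enorm_ge0 R n).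
have rT : T * rho T * Num.max (enorm x) (enorm y) <= T * (rho1 * (B + e)).
  rewrite -mulrA ler_pM2l //; apply: le_trans (ler_wpM2r m0 (hr j)) _.
  by rewrite ler_wpM2l.
set u := expR (a * t).
have aT0 : 0 <= a * T by rewrite mulr_ge0 // ltW.
have v1 : 1 + a * T <= expR (a * T) by exact: expR_ge1Dx.
have h1 : e * (1 + a * T) <= c * (u - 1) * (1 + a * T).
  by apply: ler_wpM2r => //; lra.
have u0 : 0 <= u by exact: expR_ge0.
have h2 : c * (u * (1 + a * T)) <= c * (u * expR (a * T)).
  by apply: ler_wpM2l => //; apply: ler_wpM2l.
rewrite [a * (t + T)]mulrDr expRD -/u.
have ca' : c * a * T = rho1 * B * T by rewrite ca.
rewrite /a in h1 h2 ca' aT0 v1 *.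
nra.
Qed.
End Cmp.

Local Close Scope classical_set_scope.

Section Tr.
Variable R : realType.

Lemma err_le (K rho1 B t H : R) : 0 < K -> 0 <= rho1 <= 1 -> 0 <= B -> 0 <= t <= H ->
  rho1 * B / (K + rho1) * (expR ((K + rho1) * t) - 1) <= rho1 * B / K * expR ((K + 1) * H).
Proof.
move=> K0 /andP[r0 r1] B0 /andP[t0 tH].
have a0 : 0 < K + rho1 by rewrite ltr_pwDl.
apply: (@le_trans _ _ (rho1 * B / (K + rho1) * expR ((K + 1) * H))).
  apply: ler_wpM2l; first by rewrite divr_ge0 ?mulr_ge0 // ltW.
  have : expR ((K + rho1) * t) <= expR ((K + 1) * H).
    rewrite ler_expR; apply: ler_pM; lra.
  lra.
apply: ler_wpM2r; first exact: expR_ge0.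
apply: ler_wpM2l; first by rewrite mulr_ge0.
by rewrite lef_pV2 ?posrE // lerDl.
Qed.

Lemma LES_transfer n (Fa Fb : DTmodel R n) : EPC Fa Fb -> LES_VSR Fb -> LES_VSR Fa.
Proof.
move=> epc [K0 [r0 [T0 [lam [K01 [r0p [T0p [lamp hb]]]]]]]].
have K0p : 0 < K0 by exact: lt_le_trans K01.
set M := 2 * K0 * r0.
have M0 : 0 <= M by rewrite /M !mulr_ge0 // ltW.
have [K [T1 [Kp [T1p [rho [[rhoK _] hepc]]]]]] := epc M M0.
have l4 : 0 < ln (4 * K0) by apply: ln_gt0; lra.
set tau := ln (4 * K0) / lam.
have tau0 : 0 < tau by rewrite divr_gt0.
have etau : expR (- (lam * tau)) = (4 * K0)^-1.
  have -> : lam * tau = ln (4 * K0) by rewrite /tau; field; rewrite gt_eqF.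
  by rewrite expRN lnK // posrE; lra.
set H := tau + 1.
have H0 : 0 < H by rewrite /H; lra.
set E := expR ((K + 1) * H).
have E0 : 0 < E by exact: expR_gt0.
set dr := Num.min 1 (K / (4 * K0 * E)).
have h4 : 0 < 4 * K0 * E by apply: mulr_gt0 => //; apply: mulr_gt0 => //; lra.
have dr0 : 0 < dr by rewrite lt_min ltr01 /= divr_gt0.
have dr1 : dr <= 1 by rewrite ge_min lexx.
have dr2 : dr * (4 * K0 * E) <= K.
  rewrite -ler_pdivlMr //.
  by rewrite ge_min lexx orbT.
have [dT dT0 hdT] := @classK_small R rho rhoK dr dr0.
set Tst := Num.min (Num.min T0 T1) (Num.min dT 1).
have Tst0 : 0 < Tst by rewrite !lt_min T0p T1p dT0 ltr01.
have TstT0 : Tst <= T0 by rewrite !ge_min lexx.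
have TstT1 : Tst <= T1 by rewrite !ge_min lexx orbT.
have TstdT : Tst <= dT by rewrite !ge_min lexx orbT.
have Tst1 : Tst <= 1 by rewrite !ge_min lexx !orbT.
have win : forall Ts x0 j, inPhi Tst Ts -> enorm x0 <= r0 -> tsum Ts j <= H ->
   enorm (sol Fa x0 Ts j) <= K0 * enorm x0 * expR (- (lam * tsum Ts j)) + enorm x0 / 4.
  move=> Ts x0 j hT hx hj.
  have hT0 : inPhi T0 Ts.
    by move=> i; have /andP[a b] := hT i; rewrite a (lt_le_trans b).
  have hT1 : inPhi T1 Ts.
    by move=> i; have /andP[a b] := hT i; rewrite a (lt_le_trans b).
  have hr : forall i, rho (Ts i) <= dr.
    move=> i; have /andP[a b] := hT i; apply: hdT.
    by rewrite (ltW a) /= (le_trans (ltW b)).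
  have x00 : 0 <= enorm x0 by exact: enorm_ge0.
  have hB : forall i, enorm (sol Fb x0 Ts i) <= K0 * enorm x0.
    move=> i; apply: le_trans (hb i Ts x0 hT0 hx) _.
    apply: ler_piMr; first by rewrite mulr_ge0 // ltW.
    rewrite -expR0 ler_expR oppr_le0 mulr_ge0 ?(ltW lamp) //.
    exact: tsum_ge0 hT.
  have err : forall t, 0 <= t <= H ->
      dr * (K0 * enorm x0) / (K + dr) * (expR ((K + dr) * t) - 1) <= enorm x0 / 4.
    move=> t ht.
    apply: le_trans (@err_le K dr (K0 * enorm x0) t H Kp _ _ ht) _.
    - by rewrite (ltW dr0) dr1.
    - by rewrite mulr_ge0 // ltW.
    rewrite -/E.
    have -> : dr * (K0 * enorm x0) / K * E = (dr * (4 * K0 * E)) * (enorm x0 / (4 * K)).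
      by field; rewrite gt_eqF.
    apply: le_trans (ler_wpM2r _ dr2) _.
      by rewrite divr_ge0 // mulr_ge0 // ltW.
    by rewrite le_eqVlt; apply/orP; left; apply/eqP; field; rewrite gt_eqF.
  have t0 : 0 <= tsum Ts j by exact: tsum_ge0 hT.
  have hM : K0 * enorm x0 + dr * (K0 * enorm x0) / (K + dr) * (expR ((K + dr) * H) - 1) <= M.
    have := err H; rewrite lexx (ltW H0) => /(_ isT) e1.
    rewrite /M; nra.
  have hc := @compare R n Fa Fb M K T1 rho dr (K0 * enorm x0) H Ts x0 Kp (ltW dr0) hepc hT1 hr hB hM j hj.
  have := err _ ((introT andP (conj t0 hj))) => e2.
  have := enorm_tri (sol Fa x0 Ts j) (sol Fb x0 Ts j).
  have := hb j Ts x0 hT0 hx.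
  lra.
exists (4 * K0), r0, Tst, (ln 2 / H).
have ln2 : 0 < ln (2 : R) by apply: ln_gt0; lra.
have lH : ln 2 / H * H = ln 2 by field; rewrite gt_eqF.
have eH : expR (- (ln 2 / H * H)) = 2^-1 by rewrite lH expRN lnK // posrE.
split; first lra.
split; first exact: r0p.
split; first exact: Tst0.
split; first by rewrite divr_gt0.
set lam' := ln 2 / H in lH eH *.
have lam'0 : 0 < lam' by rewrite divr_gt0.
have half : forall t, 0 <= t <= H -> 2^-1 <= expR (- (lam' * t)).
  move=> t /andP[_ tH]; rewrite -eH ler_expR lerN2 ler_pM2l //.
move=> k; elim/ltn_ind: k => k IH Ts x0 hT hx0.
have x00 : 0 <= enorm x0 by exact: enorm_ge0.
have t0 : forall j, 0 <= tsum Ts j by move=> j; exact: tsum_ge0 hT.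
have el1 : forall j, expR (- (lam * tsum Ts j)) <= 1.
  move=> j; rewrite -expR0 ler_expR oppr_le0 mulr_ge0 ?(ltW lamp) //.
case: (first_passage Tst Ts tau k hT tau0) => [lt|[m [m0 mk tm1 tm2]]].
  have tk : tsum Ts k <= H by rewrite /H; lra.
  have w := win Ts x0 k hT hx0 tk.
  have h1 := el1 k.
  have h2 := half _ ((introT andP (conj (t0 k) tk))).
  have : K0 * enorm x0 * expR (- (lam * tsum Ts k)) <= K0 * enorm x0.
    by apply: ler_piMr => //; rewrite mulr_ge0 // ltW.
  have : 4 * K0 * enorm x0 * 2^-1 <= 4 * K0 * enorm x0 * expR (- (lam' * tsum Ts k)).
    by apply: ler_wpM2l => //; rewrite mulr_ge0 // mulr_ge0 //; lra.
  have -> : 4 * K0 * enorm x0 * 2^-1 = 2 * K0 * enorm x0 by field.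
  nra.
have tmH : tsum Ts m <= H by rewrite /H; lra.
have wm := win Ts x0 m hT hx0 tmH.
have em : expR (- (lam * tsum Ts m)) <= (4 * K0)^-1.
  by rewrite -etau ler_expR lerN2 ler_pM2l.
have xm : enorm (sol Fa x0 Ts m) <= enorm x0 / 2.
  have : K0 * enorm x0 * expR (- (lam * tsum Ts m)) <= K0 * enorm x0 * (4 * K0)^-1.
    by apply: ler_wpM2l => //; rewrite mulr_ge0 // ltW.
  have -> : K0 * enorm x0 * (4 * K0)^-1 = enorm x0 / 4 by field; rewrite gt_eqF.
  lra.
rewrite -(subnKC mk) sol_shift tsum_shift.
have ltk : (k - m < k)%N by rewrite ltn_subrL m0 (leq_trans m0 mk).
have := IH (k - m)%N ltk (fun i => Ts (m + i)%N) (sol Fa x0 Ts m) (inPhi_shift Tst Ts m hT).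
have xm0 : enorm (sol Fa x0 Ts m) <= r0 by lra.
move=> /(_ xm0).
set s := tsum (fun i => Ts (m + i)%N) (k - m).
set tm := tsum Ts m.
have s0 : 0 <= s by apply: tsum_ge0; exact: inPhi_shift.
have hm := half _ (introT andP (conj (t0 m) tmH)).
rewrite -/tm in hm.
have -> : expR (- (lam' * (tm + s))) = expR (- (lam' * tm)) * expR (- (lam' * s)).
  by rewrite -expRD; congr expR; ring.
have es0 : 0 <= expR (- (lam' * s)) by exact: expR_ge0.
have xm00 : 0 <= enorm (sol Fa x0 Ts m) by exact: enorm_ge0.
move=> hI.
have : 4 * K0 * enorm (sol Fa x0 Ts m) * expR (- (lam' * s))
       <= 4 * K0 * (enorm x0 / 2) * expR (- (lam' * s)).
  apply: ler_wpM2r => //; apply: ler_wpM2l => //; lra.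
move=> h3.
have : 4 * K0 * enorm x0 * (2^-1 * expR (- (lam' * s)))
    <= 4 * K0 * enorm x0 * (expR (- (lam' * tm)) * expR (- (lam' * s))).
  apply: ler_wpM2l; first by rewrite !mulr_ge0 //; lra.
  exact: ler_wpM2r.
have eq3 : 4 * K0 * (enorm x0 / 2) * expR (- (lam' * s))
   = 4 * K0 * enorm x0 * (2^-1 * expR (- (lam' * s))) by ring.
rewrite eq3 in h3.
lra.
Qed.

Lemma SPS_transfer n (Fa Fb : DTmodel R n) : EPC Fa Fb -> SPS_VSR Fb -> SPS_VSR Fa.
Proof.
move=> epc [beta [bKL hb]]; exists beta; split => // M Rr M0 Rr0.
set M1 := M + 1.
have M10 : 0 < M1 by rewrite /M1; lra.
have [d d0 hd] := @classK_small R (fun s => beta s 0) (bKL.1 0 (lexx 0)) (Rr / 4)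
  ltac:(by rewrite divr_gt0).
set de := Num.min d 1.
have de0 : 0 < de by rewrite lt_min d0 ltr01.
have ded : de <= d by rewrite ge_min lexx.
have de1 : de <= 1 by rewrite ge_min lexx orbT.
have bde : beta de 0 <= Rr / 4 by apply: hd; rewrite (ltW de0).
set r := Num.min (de / 3) (Rr / 4).
have r0 : 0 < r by rewrite lt_min !divr_gt0.
have r1 : r <= de / 3 by rewrite ge_min lexx.
have r2 : r <= Rr / 4 by rewrite ge_min lexx orbT.
have [tau tau0 btau] := @KL_small R beta bKL M1 (de / 3) M10 ltac:(by rewrite divr_gt0).
set H := tau + 1.
have H0 : 0 < H by rewrite /H; lra.
have [Tb [Tb0 hbb]] := hb M1 r (ltW M10) r0.
set B := beta M1 0 + 1.
have bM0 : 0 <= beta M1 0 by apply: (KL_ge0 bKL); rewrite ?(ltW M10).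
have B0 : 0 <= B by rewrite /B; lra.
set Mp := B + 1.
have Mp0 : 0 <= Mp by rewrite /Mp; lra.
have [K [T1 [Kp [T1p [rho [[rhoK _] hepc]]]]]] := epc Mp Mp0.
set E := expR ((K + 1) * H).
have E0 : 0 < E by exact: expR_gt0.
have BE : 0 < B * E + 1 by have := mulr_ge0 B0 (ltW E0); lra.
set dr := Num.min 1 (K * r / (B * E + 1)).
have dr0 : 0 < dr by rewrite lt_min ltr01 /= divr_gt0 // mulr_gt0.
have dr1 : dr <= 1 by rewrite ge_min lexx.
have dr2 : dr * (B * E + 1) <= K * r.
  rewrite -ler_pdivlMr //.
  by rewrite ge_min lexx orbT.
have [dT dT0 hdT] := @classK_small R rho rhoK dr dr0.
set Tst := Num.min (Num.min Tb T1) (Num.min dT 1).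
have Tst0 : 0 < Tst by rewrite !lt_min Tb0 T1p dT0 ltr01.
have TstT0 : Tst <= Tb by rewrite !ge_min lexx.
have TstT1 : Tst <= T1 by rewrite !ge_min lexx orbT.
have TstdT : Tst <= dT by rewrite !ge_min lexx orbT.
have Tst1 : Tst <= 1 by rewrite !ge_min lexx !orbT.
have win : forall Ts x0 j, inPhi Tst Ts -> enorm x0 <= M1 -> tsum Ts j <= H ->
   enorm (sol Fa x0 Ts j) <= beta (enorm x0) (tsum Ts j) + r + r.
  move=> Ts x0 j hT hx hj.
  have hT0 : inPhi Tb Ts.
    by move=> i; have /andP[a b] := hT i; rewrite a (lt_le_trans b).
  have hT1 : inPhi T1 Ts.
    by move=> i; have /andP[a b] := hT i; rewrite a (lt_le_trans b).
  have hr : forall i, rho (Ts i) <= dr.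
    move=> i; have /andP[a b] := hT i; apply: hdT.
    by rewrite (ltW a) /= (le_trans (ltW b)).
  have x00 : 0 <= enorm x0 by exact: enorm_ge0.
  have hB : forall i, enorm (sol Fb x0 Ts i) <= B.
    move=> i; apply: le_trans (hbb i Ts x0 hT0 hx) _.
    have : beta (enorm x0) (tsum Ts i) <= beta M1 0.
      apply: (KL_le bKL) => //; exact: tsum_ge0 hT.
    rewrite /B; lra.
  have err : forall t, 0 <= t <= H ->
      dr * B / (K + dr) * (expR ((K + dr) * t) - 1) <= r.
    move=> t ht.
    apply: le_trans (@err_le K dr B t H Kp _ B0 ht) _.
      by rewrite (ltW dr0) dr1.
    rewrite -/E.
    have : dr * (B * E) <= K * r.
      apply: le_trans dr2; apply: ler_wpM2l; rewrite ?(ltW dr0) //; lra.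
    move=> h.
    have -> : dr * B / K * E = (dr * (B * E)) / K by field; rewrite gt_eqF.
    rewrite ler_pdivrMr //; lra.
  have t0 : 0 <= tsum Ts j by exact: tsum_ge0 hT.
  have hM : B + dr * B / (K + dr) * (expR ((K + dr) * H) - 1) <= Mp.
    have := err H; rewrite lexx (ltW H0) => /(_ isT) e1.
    rewrite /Mp; have : r <= 1 by lra.
    lra.
  have hc := @compare R n Fa Fb Mp K T1 rho dr B H Ts x0 Kp (ltW dr0) hepc hT1 hr hB hM j hj.
  have := err _ (introT andP (conj t0 hj)) => e2.
  have := enorm_tri (sol Fa x0 Ts j) (sol Fb x0 Ts j).
  have := hbb j Ts x0 hT0 hx.
  lra.
have restart : forall Ts x0 m, inPhi Tst Ts -> enorm x0 <= M1 ->
    tau <= tsum Ts m -> tsum Ts m <= H -> enorm (sol Fa x0 Ts m) <= de.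
  move=> Ts x0 m hT hx h1 h2.
  have := win Ts x0 m hT hx h2.
  have : beta (enorm x0) (tsum Ts m) <= beta M1 tau.
    by apply: (KL_le bKL) => //; [exact: enorm_ge0 | exact: ltW].
  lra.
have inv : forall k Ts x0, inPhi Tst Ts -> enorm x0 <= de -> enorm (sol Fa x0 Ts k) <= Rr.
  move=> k; elim/ltn_ind: k => k IH Ts x0 hT hx0.
  have hx1 : enorm x0 <= M1 by rewrite /M1; lra.
  case: (first_passage Tst Ts tau k hT tau0) => [lt|[m [m0 mk tm1 tm2]]].
    have tk : tsum Ts k <= H by rewrite /H; lra.
    have w := win Ts x0 k hT hx1 tk.
    have : beta (enorm x0) (tsum Ts k) <= beta de 0.
      by apply: (KL_le bKL) => //; [exact: enorm_ge0 | exact: tsum_ge0 hT].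
    lra.
  have tmH : tsum Ts m <= H by rewrite /H; lra.
  have xm := restart Ts x0 m hT hx1 tm1 tmH.
  rewrite -(subnKC mk) sol_shift.
  have ltk : (k - m < k)%N by rewrite ltn_subrL m0 (leq_trans m0 mk).
  exact: IH (k - m)%N ltk (fun i => Ts (m + i)%N) (sol Fa x0 Ts m) (inPhi_shift Tst Ts m hT) xm.
exists Tst; split => // k Ts x0 hT hx0.
have hx1 : enorm x0 <= M1 by rewrite /M1; lra.
have bk0 : 0 <= beta (enorm x0) (tsum Ts k).
  by apply: (KL_ge0 bKL); [exact: enorm_ge0 | exact: tsum_ge0 hT].
case: (first_passage Tst Ts tau k hT tau0) => [lt|[m [m0 mk tm1 tm2]]].
  have tk : tsum Ts k <= H by rewrite /H; lra.
  have w := win Ts x0 k hT hx1 tk.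
  lra.
have tmH : tsum Ts m <= H by rewrite /H; lra.
have xm := restart Ts x0 m hT hx1 tm1 tmH.
rewrite -(subnKC mk) sol_shift.
have := inv (k - m)%N (fun i => Ts (m + i)%N) (sol Fa x0 Ts m) (inPhi_shift Tst Ts m hT) xm.
rewrite subnKC //.
lra.
Qed.

Lemma EPC_sym n (Fa Fb : DTmodel R n) : EPC Fa Fb -> EPC Fb Fa.
Proof.
move=> epc M M0; have [K [T [K0 [T0 [rho [hr h]]]]]] := epc M M0.
exists K, T; split => //; split => //; exists rho; split => // x y t hx hy ht.
have := h y x t hy hx ht.
by rewrite -enormN opprB -(enormN (x - y)) opprB maxC.
Qed.
End Tr.

Theorem theorem1 (R : realType) (n : nat) (Fa Fb : DTmodel R n) :
  EPC Fa Fb ->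
  (SPS_VSR Fa <-> SPS_VSR Fb) /\
  (LES_VSR Fa <-> LES_VSR Fb) /\
  (SLES_VSR Fa <-> SLES_VSR Fb).
Proof.
move=> epc; have epc' := EPC_sym R n Fa Fb epc.
have h1 : SPS_VSR Fa <-> SPS_VSR Fb.
  by split; [exact: (SPS_transfer R n Fb Fa epc') | exact: (SPS_transfer R n Fa Fb epc)].
have h2 : LES_VSR Fa <-> LES_VSR Fb.
  by split; [exact: (LES_transfer R n Fb Fa epc') | exact: (LES_transfer R n Fa Fb epc)].
split => //; split => //.
rewrite /SLES_VSR; tauto.
Qed.
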